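(* Let $d\ge2$, $\alpha\in(1,2)$, and let $\mu$ be a nondegenerate $\alpha$-stable distribution on $\mathbb{R}^d$ with no shift, spectral spherical measure $\lambda$, and characteristic exponent $|z|^\alpha V(u_z)$. For $z\in\mathbb{C}$ with $\Re z>0$ let $\varrho(z)=|z|^2/(2\Re z)$. Then $$0<\varrho_0:=\sup_{u\in\mathbb{S}^{d-1}}\varrho(V(u))<\frac{\lambda(\mathbb{S}^{d-1})}{1+\cos(\pi\alpha)}<\infty.$$ Moreover, for any $R>\varrho_0$, letting $V_*=R-V$, one has $\sup_{\mathbb{S}^{d-1}}|V_*|<R$.
   Context: Let $d\ge 2$, $\mathbb{S}^{d-1}$ the unit sphere, $u_z=z/|z|$. An $\alpha$-stable distribution ($\alpha\ne1$) with no shift has $\hat\mu(z)=\exp\{-|z|^\alpha V(u_z)\}$, $V(u)=\int_{\mathbb{S}^{d-1}}|\langle u,v\rangle|^\alpha[1-i\tan(\pi\alpha/2)\mathrm{sgn}\langle u,v\rangle]\lambda(dv)$, where $\lambda$ is a finite nonzero Borel measure on the sphere (the spectral spherical measure). Nondegenerate: the support of $\mu$ is not contained in a proper affine subspace (equivalently $\inf\Re V>0$). *)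

(* Defs.v *)
From HB Require Import structures.
From mathcomp Require Import all_boot all_order all_algebra.
From mathcomp Require Import all_classical all_reals all_analysis.
Set Implicit Arguments. Unset Strict Implicit. Unset Printing Implicit Defensive.
Import Order.TTheory GRing.Theory Num.Theory.
Local Open Scope classical_set_scope.
Local Open Scope ring_scope.

Section Defs.
Variables (R : realType) (d : nat).

(* R^d as row vectors, with a (trivial) pointed structure so that the
   library's generated sigma-algebra construction applies. *)
Definition vecR := 'rV[R]_d.
HB.instance Definition _ := Choice.on vecR.
HB.instance Definition _ := isPointed.Build vecR 0.

(* Borel sigma-algebra on R^d, generated by the coordinate projections
   (product Borel sigma-algebra, which equals Borel(R^d)). *)
Definition coord_gen : set (set vecR) :=
  [set A | exists (i : 'I_d) (B : set R),
      measurable B /\ A = (fun x : vecR => x ord0 i) @^-1` B].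

Definition Rd := g_sigma_algebraType coord_gen.

Definition ip (u v : vecR) : R := \sum_(i < d) u ord0 i * v ord0 i.

Definition sphere : set Rd := [set u | ip u u = 1].

(* V(u) = int_{S^{d-1}} |<u,v>|^a [1 - i tan(pi a/2) sgn<u,v>] lambda(dv),
   split into its real and imaginary parts *)
Definition VRe (lam : {measure set Rd -> \bar R}) (a : R) (u : Rd) : R :=
  Rintegral lam sphere (fun v : Rd => `|ip u v| `^ a).

Definition VIm (lam : {measure set Rd -> \bar R}) (a : R) (u : Rd) : R :=
  - tan (pi * a / 2) *
    Rintegral lam sphere (fun v : Rd => `|ip u v| `^ a * Num.sg (ip u v)).

(* rho(z) = |z|^2 / (2 Re z) for z = x + i y *)
Definition rho (x y : R) : R := (x ^+ 2 + y ^+ 2) / (2 * x).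

Definition cmod (x y : R) : R := Num.sqrt (x ^+ 2 + y ^+ 2).

End Defs.

(* Main.v *)
Require Import Defs.
From mathcomp Require Import all_boot all_order all_algebra.
From mathcomp Require Import all_classical all_reals all_analysis.
From mathcomp Require Import ring lra.
Import Order.TTheory GRing.Theory Num.Theory.
Set Implicit Arguments. Unset Strict Implicit.
Local Open Scope classical_set_scope.
Local Open Scope ring_scope.

Section S.
Variables (R : realType) (d : nat).
Implicit Types u v w : vecR R d.
Lemma ipC u v : ip u v = ip v u.
Proof. by apply: eq_bigr => i _; rewrite mulrC. Qed.
Lemma ipDl u v w : ip (u + v) w = ip u w + ip v w.
Proof. by rewrite /ip -big_split; apply: eq_bigr => i _; rewrite !mxE mulrDl. Qed.
Lemma ipZl k u w : ip (k *: u) w = k * ip u w.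
Proof. by rewrite /ip mulr_sumr; apply: eq_bigr => i _; rewrite !mxE mulrA. Qed.
Lemma ipNl u w : ip (- u) w = - ip u w.
Proof. by rewrite -scaleN1r ipZl mulN1r. Qed.
Lemma ipBl u v w : ip (u - v) w = ip u w - ip v w.
Proof. by rewrite ipDl ipNl. Qed.
Lemma ipDr u v w : ip w (u + v) = ip w u + ip w v.
Proof. by rewrite ipC ipDl !(ipC w). Qed.
Lemma ipZr k u w : ip w (k *: u) = k * ip w u.
Proof. by rewrite ipC ipZl ipC. Qed.
Lemma ipBr u v w : ip w (u - v) = ip w u - ip w v.
Proof. by rewrite ipC ipBl !(ipC w). Qed.
Lemma ip_ge0 u : 0 <= ip u u.
Proof. by apply: sumr_ge0 => i _; rewrite -expr2 sqr_ge0. Qed.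
Lemma ip_delta u (i : 'I_d) : ip u (delta_mx 0 i) = u ord0 i.
Proof.
rewrite /ip (bigD1 i) //= big1 ?addr0.
  by rewrite mxE !eqxx mulr1.
by move=> j ji; rewrite mxE (negbTE ji) andbF mulr0.
Qed.
Lemma ip_le1 u v : ip u u = 1 -> ip v v = 1 -> `|ip u v| <= 1.
Proof.
move=> hu hv.
have h1 := ip_ge0 (u - v); have h2 := ip_ge0 (u + v).
rewrite ipBl !ipBr hu hv (ipC v u) in h1.
rewrite ipDl !ipDr hu hv (ipC v u) in h2.
rewrite ler_norml; apply/andP; split; lra.
Qed.
Lemma bessel u w v : ip u u = 1 -> ip w w = 1 -> ip u w = 0 ->
  ip u v ^+ 2 + ip w v ^+ 2 <= ip v v.
Proof.
move=> hu hw huw.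
set x := ip u v; set y := ip w v.
have := ip_ge0 (v - x *: u - y *: w).
rewrite !ipBl !ipZl !ipBr !ipZr.
rewrite hu hw huw (ipC w u) huw (ipC v u) (ipC v w) -/x -/y.
move=> h; nra.
Qed.
Lemma orth_exists u : (2 <= d)%N -> ip u u = 1 ->
  exists w, ip w w = 1 /\ ip u w = 0.
Proof.
move=> hd hu.
have h0 : (0 < d)%N by apply: leq_trans hd.
pose i0 : 'I_d := Ordinal h0. pose i1 : 'I_d := Ordinal hd.
have hi : i0 != i1 by [].
have ee i j : ip (delta_mx 0 i : vecR R d) (delta_mx 0 j) = (i == j)%:R.
  by rewrite ip_delta mxE eqxx /= eq_sym.
set p := u ord0 i0; set q := u ord0 i1.
have [hz|hz] := eqVneq (p ^+ 2 + q ^+ 2) 0.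
  exists (delta_mx 0 i0); rewrite ee eqxx ip_delta; split => //.
  have : p ^+ 2 = 0 by have := sqr_ge0 p; have := sqr_ge0 q; lra.
  by move/eqP; rewrite sqrf_eq0 => /eqP.
have hpos : 0 < p ^+ 2 + q ^+ 2.
  by rewrite lt_def hz /=; apply: addr_ge0; apply: sqr_ge0.
set n := Num.sqrt (p ^+ 2 + q ^+ 2).
have hn : 0 < n by rewrite sqrtr_gt0.
have hn2 : n ^+ 2 = p ^+ 2 + q ^+ 2 by rewrite sqr_sqrtr // ltW.
exists ((q / n) *: delta_mx 0 i0 - (p / n) *: delta_mx 0 i1).
rewrite !ipBl !ipBr !ipZl !ipZr !ee !ip_delta eqxx (negbTE hi) eq_sym (negbTE hi) -/p -/q.
split.
  have hn0 : n != 0 by rewrite gt_eqF.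
  rewrite eqxx /= !mulr1 !mulr0 !subr0 ?sub0r ?opprK.
  have -> : q / n * (q / n) + p / n * (p / n) = (p ^+ 2 + q ^+ 2) / n ^+ 2.
    by field.
  by rewrite -hn2 divff // expf_neq0.
by field; rewrite gt_eqF.
Qed.
Lemma mcoord (i : 'I_d) : measurable_fun setT (fun x : Rd R d => x ord0 i).
Proof.
move=> _ B mB; rewrite setTI.
apply: sub_sigma_algebra; exists i, B; split => //.
Qed.
Lemma mip (u : vecR R d) : measurable_fun setT (fun x : Rd R d => ip u x).
Proof.
rewrite /ip; apply: measurable_sum => i.
apply: measurable_realfun.measurable_funM; [exact: measurable_cst| exact: mcoord].
Qed.
Lemma mipp : measurable_fun setT (fun x : Rd R d => ip x x).
Proof.
rewrite /ip; apply: measurable_sum => i.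
apply: measurable_realfun.measurable_funM; exact: mcoord.
Qed.
Lemma msphere : measurable (@sphere R d).
Proof.
have := @mipp measurableT [set 1] (measurable_set1 (1:R)).
by rewrite setTI.
Qed.
Lemma msg (u : vecR R d) : measurable_fun setT (fun x : Rd R d => Num.sg (ip u x)).
Proof.
rewrite (_ : (fun x : Rd R d => Num.sg (ip u x)) =
  (fun x => if 0 < ip u x then 1 else if ip u x < 0 then -1 else 0)); last first.
  by apply: funext => x; case: (sgrP (ip u x)).
apply: measurable_fun_ifT.
- by apply: measurable_realfun.measurable_fun_ltr => //; exact: mip.
- exact: measurable_cst.
apply: measurable_fun_ifT.
- by apply: measurable_realfun.measurable_fun_ltr => //; exact: mip.
- exact: measurable_cst.
- exact: measurable_cst.
Qed.
Lemma powle (r a : R) : 0 <= r <= 1 -> 1 <= a -> r `^ a <= r.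
Proof.
move=> /andP[r0 r1] a1.
have [->|rp] := eqVneq r 0.
  by rewrite powR0 // gt_eqF // (lt_le_trans ltr01).
apply: ge1r_powR => //; rewrite r1 andbT lt_def rp r0 //=.
Qed.
Lemma pw (s r eta a : R) : 0 <= s <= 1 -> 0 <= r <= 1 -> s ^+ 2 + r ^+ 2 <= 1 ->
  0 < eta -> 1 <= a -> eta * r `^ a + s `^ a <= eta ^+ 2 / 2 + 1.
Proof.
move=> hs hr hsr he ha.
have h1 := @powle s a hs ha; have h2 := @powle r a hr ha.
have h3 : eta * r `^ a <= eta * r by rewrite ler_pM2l.
have := sqr_ge0 (eta - r); have := sqr_ge0 (1 - s).
move: hs hr => /andP[? ?] /andP[? ?].
nra.
Qed.
End S.
Section Main.
Variables (R : realType) (d : nat) (a : R)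
  (lam : {finite_measure set (Rd R d) -> \bar R}).
Hypotheses (hd : (2 <= d)%N) (ha1 : 1 < a) (hnz : (0 < lam (@sphere R d))%E).

Local Notation S := (@sphere R d).
Definition ff (u v : Rd R d) : R := `|ip u v| `^ a.

Lemma ff01 u v : S u -> S v -> 0 <= ff u v <= 1.
Proof.
move=> hu hv; rewrite /ff powR_ge0 /=.
have h := ip_le1 hu hv.
apply: le_trans h; apply: powle; [by rewrite normr_ge0 (ip_le1 hu hv)| exact: ltW].
Qed.

Definition L := fine (lam S).
Lemma lamE : lam S = L%:E.
Proof. by rewrite /L fineK //; apply: fin_num_measure; exact: msphere. Qed.
Lemma L_gt0 : 0 < L.
Proof. by have := hnz; rewrite lamE lte_fin. Qed.

Lemma mff u : measurable_fun setT (ff u).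
Proof.
rewrite /ff.
apply: (measurableT_comp (measurable_realfun.measurable_powR a)).
apply: (measurableT_comp (@measurable_realfun.normr_measurable R setT)).
exact: mip.
Qed.

Lemma int_bd (h : Rd R d -> R) (K : R) : measurable_fun setT h ->
  (forall v, S v -> `|h v| <= K) -> lam.-integrable S (EFin \o h).
Proof.
move=> mh hb; apply: measurable_bounded_integrable.
- exact: msphere.
- by rewrite -ge0_fin_numE //; apply: fin_num_measure; exact: msphere.
- exact: measurable_funS mh.
exists K; split => [|M hM x hx]; first exact: num_real.
by apply: le_trans (hb _ hx) _; apply: ltW.
Qed.

Lemma int_ff u : S u -> lam.-integrable S (EFin \o ff u).
Proof.
move=> hu; apply: (@int_bd _ 1); first exact: mff.
by move=> v hv; have /andP[h0 h1] := ff01 hu hv; rewrite ger0_norm.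
Qed.

Lemma int_cst (k : R) : lam.-integrable S (EFin \o (fun=> k)).
Proof.
apply/integrableP; split; first exact: measurable_cst.
have hl : (lam S < +oo)%E by rewrite -ge0_fin_numE //; apply: fin_num_measure; exact: msphere.
rewrite integral_cst /=; last exact: msphere.
by rewrite lte_mul_pinfty.
Qed.


Lemma VRe_le u : S u -> VRe lam a u <= L.
Proof.
move=> hu; rewrite /VRe.
have -> : L = Rintegral lam S (fun _ => 1).
  rewrite Rintegral_cst; last exact: msphere.
  rewrite /L; lra.
apply: le_Rintegral; [exact: msphere| exact: int_ff| exact: int_cst|].
by move=> v hv; case/andP: (ff01 hu hv).
Qed.

Lemma VRe_ge0 u : S u -> 0 <= VRe lam a u.
Proof.
move=> hu; apply: Rintegral_ge0 => v hv.
by case/andP: (ff01 hu hv).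
Qed.

Lemma gap u c : 0 < c -> (forall w, S w -> c <= VRe lam a w) -> S u ->
  VRe lam a u <= L - c ^+ 2 / (2 * L).
Proof.
move=> hc hcV hu.
have [w [hw huw]] := orth_exists hd hu.
have hL := L_gt0.
set eta := c / L.
have he : 0 < eta by rewrite divr_gt0.
have key : eta * VRe lam a w + VRe lam a u <= (eta ^+ 2 / 2 + 1) * L.
  have -> : (eta ^+ 2 / 2 + 1) * L = Rintegral lam S (fun _ => eta ^+ 2 / 2 + 1).
    by rewrite Rintegral_cst; last exact: msphere.
  rewrite /VRe -RintegralZl; [|exact: msphere| exact: int_ff].
  rewrite -RintegralD; [|exact: msphere| |exact: int_ff]; last first.
    apply: (@int_bd _ eta).
      apply: measurable_realfun.measurable_funM; [exact: measurable_cst| exact: mff].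
    move=> v hv; have /andP[h0 h1] := ff01 hw hv.
    rewrite normrM (gtr0_norm he) ger0_norm //.
    by rewrite -[X in _ <= X]mulr1 ler_pM2l.
  apply: le_Rintegral; [exact: msphere| | exact: int_cst|].
    apply: (@int_bd _ (eta + 1)).
      apply: measurable_realfun.measurable_funD; last exact: mff.
      apply: measurable_realfun.measurable_funM; [exact: measurable_cst| exact: mff].
    move=> v hv; have /andP[h0 h1] := ff01 hw hv.
    have /andP[h2 h3] := ff01 hu hv.
    rewrite ger0_norm; last by apply: addr_ge0 => //; apply: mulr_ge0 => //; exact: ltW.
    have : eta * ff w v <= eta by rewrite -[X in _ <= X]mulr1 ler_pM2l.
    move=> h; change (eta * ff w v + ff u v <= eta + 1); lra.
  move=> v hv.
  have hsr := bessel v hu hw huw; rewrite hv in hsr.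
  have hs := ip_le1 hu hv; have hr := ip_le1 hw hv.
  apply: pw.
  - by rewrite normr_ge0 hs.
  - by rewrite normr_ge0 hr.
  - by rewrite !real_normK ?num_real.
  - exact: he.
  - exact: ltW.
have hcw := hcV w hw.
have : eta * c <= eta * VRe lam a w by rewrite ler_pM2l.
have -> : L - c ^+ 2 / (2 * L) = (eta ^+ 2 / 2 + 1) * L - eta * c.
  by rewrite /eta; field; rewrite gt_eqF.
lra.
Qed.

Definition gg (u v : Rd R d) : R := ff u v * Num.sg (ip u v).

Lemma B_le u : S u -> `|Rintegral lam S (gg u)| <= VRe lam a u.
Proof.
move=> hu.
have mg : measurable_fun setT (gg u).
  by apply: measurable_realfun.measurable_funM; [exact: mff| exact: msg].
have hb v : S v -> `|gg u v| <= ff u v.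
  move=> hv; have /andP[h0 h1] := ff01 hu hv.
  rewrite /gg normrM normr_sg (ger0_norm h0).
  by case: (_ != 0); rewrite ?mulr1 ?mulr0.
have ig : lam.-integrable S (EFin \o gg u).
  by apply: (@int_bd _ 1) => // v hv; apply: le_trans (hb v hv) _; case/andP: (ff01 hu hv).
apply: (le_trans (le_normr_Rintegral (@msphere R d) ig)).
apply: le_Rintegral; [exact: msphere| | exact: int_ff| exact: hb].
apply: (@int_bd _ 1).
  exact: (measurableT_comp (@measurable_realfun.normr_measurable R setT) mg).
by move=> v hv; rewrite normr_id; apply: le_trans (hb v hv) _; case/andP: (ff01 hu hv).
Qed.

End Main.
Lemma trig_facts (R : realType) (a : R) : 1 < a -> a < 2 ->
  0 < 1 + cos (pi * a) /\ (1 + tan (pi * a / 2) ^+ 2) / 2 = 1 / (1 + cos (pi * a)).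
Proof.
move=> ha1 ha2.
set x := pi * a / 2.
have hp := @pi_gt0 R.
have hc : cos x < 0.
  have -> : x = pi * (a - 1) / 2 + pi / 2 by rewrite /x; field.
  rewrite cosDpihalf oppr_lt0; apply: sin_gt0_pihalf.
  apply/andP; split.
    by apply: divr_gt0 => //; apply: mulr_gt0 => //; lra.
  rewrite ltr_pM2r ?invr_gt0 //; nra.
have hk : 1 + cos (pi * a) = 2 * cos x ^+ 2.
  have -> : pi * a = x + x by rewrite /x; field.
  rewrite cosD; have := cos2Dsin2 x; rewrite !expr2; lra.
have hc0 : cos x != 0 by rewrite lt_eqF.
have hc2 : 0 < cos x ^+ 2 by rewrite exprn_even_gt0.
split; first by rewrite hk; nra.
rewrite -cos2_tan2 // hk; field; exact: hc0.
Qed.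

Theorem lemma5p3 (R : realType) (d : nat) (a : R)
  (lam : {finite_measure set (Rd R d) -> \bar R})
  (hd : (2 <= d)%N) (ha1 : 1 < a) (ha2 : a < 2)
  (hsupp : lam (~` @sphere R d) = 0%E)
  (hnz : (0 < lam (@sphere R d))%E)
  (hnondeg : exists2 c : R, 0 < c &
      forall u, @sphere R d u -> c <= VRe lam a u) :
  let rho0 := sup [set rho (VRe lam a u) (VIm lam a u) | u in @sphere R d] in
  has_ubound [set rho (VRe lam a u) (VIm lam a u) | u in @sphere R d] /\
  0 < rho0 /\
  rho0 < fine (lam (@sphere R d)) / (1 + cos (pi * a)) /\
  forall Rr : R, rho0 < Rr ->
    let Vstar_abs := [set cmod (Rr - VRe lam a u) (- VIm lam a u)
                      | u in @sphere R d] in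
    has_ubound Vstar_abs /\ sup Vstar_abs < Rr.
Proof.
move=> rho0.
have [c hc hcV] := hnondeg.
have [hk ht] := trig_facts ha1 ha2.
set k := 1 + cos (pi * a) in hk ht *.
set t := tan (pi * a / 2) in ht.
have hL := L_gt0 hnz.
change (fine (lam (@sphere R d))) with (L lam).
set LL := L lam in hL *.
set del := c ^+ 2 / (2 * LL).
have hdel : 0 < del by rewrite /del divr_gt0 ?exprn_gt0 ?mulr_gt0.
have hA u : sphere u -> c <= VRe lam a u by exact: hcV.
have hrho u : sphere u ->
   rho (VRe lam a u) (VIm lam a u) * (2 * VRe lam a u) =
   VRe lam a u ^+ 2 + VIm lam a u ^+ 2.
  move=> hu; have := hA u hu => hcu.
  rewrite /rho; field; apply: lt0r_neq0 => /=; lra.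
have rho_ub u : sphere u -> rho (VRe lam a u) (VIm lam a u) <= (LL - del) / k.
  move=> hu.
  have hcu := hA u hu.
  have hAp : 0 < VRe lam a u by lra.
  have hg := gap hd ha1 hnz hc hcV hu.
  rewrite -/LL -/del in hg.
  have hB := B_le lam ha1 hu.
  set A := VRe lam a u in hcu hAp hg hB *.
  set B := Rintegral lam (@sphere R d) (gg a u) in hB.
  have hI : VIm lam a u = - t * B by [].
  have hB2 : B ^+ 2 <= A ^+ 2.
    rewrite -real_normK ?num_real //.
    by rewrite ler_sqr ?nnegrE ?normr_ge0 //; lra.
  have -> : (LL - del) / k = (LL - del) * ((1 + t ^+ 2) / 2).
    by rewrite ht mul1r.
  rewrite /rho ler_pdivrMr; last by lra.
  rewrite hI.
  have ht2 : 0 <= t ^+ 2 by exact: sqr_ge0.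
  have h1 : t ^+ 2 * B ^+ 2 <= t ^+ 2 * A ^+ 2 by rewrite ler_wpM2l.
  have h2 : A * A <= (LL - del) * A by rewrite ler_wpM2r //; lra.
  have h3 : t ^+ 2 * (A * A) <= t ^+ 2 * ((LL - del) * A) by rewrite ler_wpM2l.
  rewrite !expr2 in h1 h2 h3 ht2 hB2 *.
  nra.
have h0 : (0 < d)%N by apply: leq_trans hd.
pose e0 : Rd R d := delta_mx 0 (Ordinal h0).
have he0 : sphere e0 by rewrite /sphere /= /e0 ip_delta mxE !eqxx.
set E := [set rho (VRe lam a u) (VIm lam a u) | u in @sphere R d].
have hE0 : E !=set0 by exists (rho (VRe lam a e0) (VIm lam a e0)), e0.
have hEub : ubound E ((LL - del) / k).
  by move=> _ [u hu <-]; exact: rho_ub.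
have hEu : has_ubound E by exists ((LL - del) / k).
have hsup : rho0 <= (LL - del) / k by exact: ge_sup.
have hrho_le u : sphere u -> rho (VRe lam a u) (VIm lam a u) <= rho0.
  by move=> hu; apply: ub_le_sup => //; exists u.
have hpos : 0 < rho0.
  apply: lt_le_trans (hrho_le _ he0).
  have := hrho e0 he0; have := hA e0 he0.
  set A := VRe lam a e0; set I := VIm lam a e0; set r := rho A I.
  move=> hcA hr.
  have : 0 < A by lra.
  have := sqr_ge0 I; rewrite !expr2 in hr *; nra.
split => //; split => //; split.
  apply: le_lt_trans hsup _.
  by rewrite ltr_pM2r ?invr_gt0 //; lra.
move=> Rr hR Vs.
set X := Rr ^+ 2 - 2 * c * (Rr - rho0).
have hVs : ubound Vs (Num.sqrt X).
  move=> _ [u hu <-].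
  have hcu := hA u hu.
  have hr := hrho u hu; have hl := hrho_le u hu.
  set A := VRe lam a u in hcu hr hl *.
  set I := VIm lam a u in hr hl *.
  set r := rho A I in hr hl.
  have hle : (Rr - A) ^+ 2 + (- I) ^+ 2 <= X.
    rewrite /X.
    have h1 : c * (Rr - rho0) <= A * (Rr - r).
      apply: ler_pM; lra.
    rewrite !expr2 in hr *; nra.
  rewrite /cmod ler_sqrt //.
  apply: le_trans hle; apply: addr_ge0; exact: sqr_ge0.
have hVs0 : Vs !=set0 by exists (cmod (Rr - VRe lam a e0) (- VIm lam a e0)), e0.
split; first by exists (Num.sqrt X).
apply: le_lt_trans (ge_sup hVs0 hVs) _.
have hRr : 0 < Rr by lra.
rewrite -[X in _ < X](@ger0_norm _ Rr) ?ltW // -sqrtr_sqr ltr_sqrt ?exprn_gt0 //.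
rewrite /X; have : 0 < c * (Rr - rho0) by apply: mulr_gt0; lra.
lra.
Qed.
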